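(* Let $\mathcal F'=(\mathcal A',U,\varphi)$ be a weakening of a sequential formalism $\mathcal F=(\mathcal A,U,\varphi)$ and let $\mathcal S$ be a subset of $\mathcal A$. If $\mathcal S$ is algebraically tractable for $\mathcal F'$, then $\mathcal S$ is algebraically tractable for $\mathcal F$.
   Context: A finite non-associative algebra is a tuple $(\mathcal A,\cup,\neg,\emptyset,\mathcal B,\diamond,\overline{\cdot},e)$ where $(\mathcal A,\cup,\neg,\emptyset,\mathcal B)$ is a finite Boolean algebra and for all $x,y,z$: $\overline{\overline x}=x$, $\overline{x\cup y}=\overline x\cup\overline y$, $\overline{x\diamond y}=\overline y\diamond\overline x$, $e\diamond x=x\diamond e=x$, $x\diamond(y\cup z)=(x\diamond y)\cup(x\diamond z)$, $(x\diamond y)\cap\overline z=\emptyset\iff(y\diamond z)\cap\overline x=\emptyset$. $r\subseteq r'$ means $r\cup r'=r'$; atoms are basic relations. A projection operator from $\mathcal A$ to $\mathcal A'$ is a map $\Rsh$ with $\Rsh(r\cup r')=\Rsh r\cup\Rsh r'$ and $\Rsh\overline r=\overline{\Rsh r}$. A finite multi-algebra is a product $\mathcal A_1\times\cdots\times\mathcal A_m$ of finite non-associative algebras with projection operators $\Rsh_i^j:\mathcal A_i\to\mathcal A_j$ for distinct $i,j$. Relations $R=(R_1,\dots,R_m)$; basic if all $R_i$ are atoms; universal $\mathcal B=(\mathcal B_1,\dots,\mathcal B_m)$; operations and $\subseteq$ componentwise; $B\in R$ means $B$ basic, $B\subseteq R$. The projection closure $\Rsh R$ is obtained by repeatedly replacing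 $R_j$ by $R_j\cap\Rsh_i^jR_i$ until a fixed point. A sequential formalism is $(\mathcal A,U,\varphi)$ with $\mathcal A$ a finite multi-algebra, $U\ne\emptyset$, $\varphi:\mathcal A\to 2^{U\times U}$ satisfying $\varphi(\Rsh R)=\varphi(R)$, $\varphi(\overline R)=\varphi(R)^{-1}$, $\varphi((\emptyset,\dots,\emptyset))=\emptyset$, $\varphi(R\diamond R')\supseteq(\varphi(R)\circ\varphi(R'))\cap\varphi(\mathcal B)$, $\varphi(R\cap R')=\varphi(R)\cap\varphi(R')$, $\varphi(R)=\bigcup_{B\in R}\varphi(B)$. A multi-algebra $\mathcal A'$ is a weakening of $\mathcal A$ if it has the same Cartesian product (same algebras and operations) and its projections satisfy $\Rsh_i^jb\subseteq\Rsh_i'^jb$ for all distinct $i,j$ and all atoms $b$ of $\mathcal A_i$ (with $\Rsh$ those of $\mathcal A$, $\Rsh'$ those of $\mathcal A'$); then $(\mathcal A',U,\varphi)$ is called a weakening of $(\mathcal A,U,\varphi)$. A network over $\mathcal S$ is a finite set $E$ of variables with $N^{xy}\in\mathcal S$ for distinct $x,y$, $N^{yx}=\overline{N^{xy}}$; it is satisfiable if there is $(u_x)_{x\in E}\subseteq U$ with $(u_x,u_y)\in\varphi(N^{xy})$ for all distinct $x,y$; trivially inconsistent if some component of some $N^{xy}$ is $\emptyset$. The algebraic closure of $N$ for a formalism is obtained by repeatedly applying $N^{xz}\leftarrow\Rsh N^{xz}$ (projection closure of that formalism's multi-algebra) and $N^{xz}\leftarrow N^{xz}\cap(N^{xy}\diamond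 N^{yz})$ until a fixed point. $\mathcal S$ is algebraically tractable for a formalism if every network over $\mathcal S$ is satisfiable iff its algebraic closure for that formalism is not trivially inconsistent. *)

(* Defs.v *)
From Stdlib Require Import Relations.
From mathcomp Require Import all_boot.
Set Implicit Arguments. Unset Strict Implicit. Unset Printing Implicit Defensive.

(* A finite Boolean algebra is represented as the powerset algebra {set T} of
   a finite type T (every finite Boolean algebra is of this form):
   union :|:, complement ~:, empty set0, universal setT. *)

Record nalg (T : finType) := NAlg {
  conv : {set T} -> {set T};
  comp : {set T} -> {set T} -> {set T};
  ident : {set T} }.

Definition nalg_axioms (T : finType) (A : nalg T) : Prop :=
  (forall x, conv A (conv A x) = x) /\
  (forall x y, conv A (x :|: y) = conv A x :|: conv A y) /\
  (forall x y, conv A (comp A x y) = comp A (conv A y) (conv A x)) /\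
  (forall x, comp A (ident A) x = x /\ comp A x (ident A) = x) /\
  (forall x y z, comp A x (y :|: z) = comp A x y :|: comp A x z) /\
  (forall x y z, (comp A x y :&: conv A z == set0) = (comp A y z :&: conv A x == set0)).

Definition atom (T : finType) (r : {set T}) : Prop :=
  r != set0 /\ forall r', r' \subset r -> r' = set0 \/ r' = r.

Definition multirel (m : nat) (T : 'I_m -> finType) := forall i : 'I_m, {set T i}.
Definition projs (m : nat) (T : 'I_m -> finType) :=
  forall i j : 'I_m, {set T i} -> {set T j}.

Section MA.
Variables (m : nat) (T : 'I_m -> finType) (alg : forall i, nalg (T i)).

Definition is_projection (i j : 'I_m) (f : {set T i} -> {set T j}) : Prop :=
  (forall r r', f (r :|: r') = f r :|: f r') /\
  (forall r, f (conv (alg i) r) = conv (alg j) (f r)).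

(* (alg, P) is a finite multi-algebra (projections only matter for i != j). *)
Definition multialgebra (P : projs T) : Prop :=
  (forall i, nalg_axioms (alg i)) /\
  (forall i j, i != j -> is_projection (P i j)).

Definition mconv (R : multirel T) : multirel T := fun i => conv (alg i) (R i).
Definition mcomp (R R' : multirel T) : multirel T := fun i => comp (alg i) (R i) (R' i).
Definition minter (R R' : multirel T) : multirel T := fun i => R i :&: R' i.
Definition msub (R R' : multirel T) : Prop := forall i, R i \subset R' i.
Definition mempty : multirel T := fun i => set0.
Definition muniv : multirel T := fun i => setT.
Definition basic (B : multirel T) : Prop := forall i, atom (B i).

Definition pstep (P : projs T) (R R' : multirel T) : Prop :=
  exists i j, i != j /\ R' = (fun k => if k == j then R k :&: P i k (R i) else R k).

Definition pfixed (P : projs T) (R : multirel T) : Prop :=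
  forall i j, i != j -> R j :&: P i j (R i) = R j.

Definition pclosure (P : projs T) (R R' : multirel T) : Prop :=
  clos_refl_trans _ (pstep P) R R' /\ pfixed P R'.

Definition rel_eq (U : Type) (a b : U -> U -> Prop) := forall u v, a u v <-> b u v.

Definition seq_formalism (P : projs T) (U : Type)
  (phi : multirel T -> U -> U -> Prop) : Prop :=
  multialgebra P /\ inhabited U /\
  (forall R R', pclosure P R R' -> rel_eq (phi R') (phi R)) /\
  (forall R, rel_eq (phi (mconv R)) (fun u v => phi R v u)) /\
  (forall u v, ~ phi mempty u v) /\
  (forall R R' u w v, phi R u w -> phi R' w v -> phi muniv u v ->
      phi (mcomp R R') u v) /\
  (forall R R', rel_eq (phi (minter R R')) (fun u v => phi R u v /\ phi R' u v)) /\
  (forall R, rel_eq (phi R) (fun u v => exists B, basic B /\ msub B R /\ phi B u v)).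

Definition weakening (P P' : projs T) : Prop :=
  multialgebra P' /\
  forall i j, i != j -> forall b, atom b -> P i j b \subset P' i j b.

Definition network (S : multirel T -> Prop) (E : finType) (N : E -> E -> multirel T) : Prop :=
  forall x y, x != y -> S (N x y) /\ N y x = mconv (N x y).

Definition satisfiable (U : Type) (phi : multirel T -> U -> U -> Prop)
  (E : finType) (N : E -> E -> multirel T) : Prop :=
  exists u : E -> U, forall x y, x != y -> phi (N x y) (u x) (u y).

Definition triv_inconsistent (E : finType) (N : E -> E -> multirel T) : Prop :=
  exists x y, x != y /\ exists i, N x y i = set0.

(* Update N^{xz} to R (and N^{zx} to its converse, keeping a network). *)
Definition nupd (E : finType) (N : E -> E -> multirel T) (x z : E) (R : multirel T) :=
  fun a b => if (a == x) && (b == z) then R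
             else if (a == z) && (b == x) then mconv R else N a b.

Definition nstep (P : projs T) (E : finType) (N N' : E -> E -> multirel T) : Prop :=
  (exists x z R, x != z /\ pclosure P (N x z) R /\ N' = nupd N x z R) \/
  (exists x y z, [/\ x != y, y != z, x != z &
     N' = nupd N x z (minter (N x z) (mcomp (N x y) (N y z)))]).

Definition nfixed (P : projs T) (E : finType) (N : E -> E -> multirel T) : Prop :=
  (forall x z, x != z -> pfixed P (N x z)) /\
  (forall x y z, x != y -> y != z -> x != z ->
     minter (N x z) (mcomp (N x y) (N y z)) = N x z).

Definition aclosure (P : projs T) (E : finType) (N N' : E -> E -> multirel T) : Prop :=
  clos_refl_trans _ (@nstep P E) N N' /\ nfixed P N'.

Definition alg_tractable (P : projs T) (U : Type) (phi : multirel T -> U -> U -> Prop)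
  (S : multirel T -> Prop) : Prop :=
  forall (E : finType) (N : E -> E -> multirel T), network S N ->
  forall N', aclosure P N N' -> (satisfiable phi N <-> ~ triv_inconsistent N').

End MA.

(* Main.v *)
Require Import Defs.
From Stdlib Require Import Relations FunctionalExtensionality Classical.
From mathcomp Require Import all_boot.
Set Implicit Arguments. Unset Strict Implicit. Unset Printing Implicit Defensive.

Section Gen.
Variables (m : nat) (T : 'I_m -> finType) (alg : forall i, nalg (T i)).
Unset Implicit Arguments.
Variable (P : projs T).
Set Implicit Arguments.
Hypothesis HP : multialgebra alg P.

Lemma conv_mono i (A B : {set T i}) : A \subset B -> conv (alg i) A \subset conv (alg i) B.
Proof.
move=> AB. have [[_ [cU _]] _] := (HP.1 i, 0).
have -> : B = A :|: B by apply/esym/setUidPr.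
by rewrite cU subsetUl.
Qed.

Lemma conv_inv i (A : {set T i}) : conv (alg i) (conv (alg i) A) = A.
Proof. exact: (HP.1 i).1. Qed.

Lemma comp_monor i (A B C : {set T i}) : B \subset C -> Defs.comp (alg i) A B \subset Defs.comp (alg i) A C.
Proof.
move=> BC. have [_ [_ [_ [_ [cD _]]]]] := HP.1 i.
have -> : C = B :|: C by apply/esym/setUidPr.
by rewrite cD subsetUl.
Qed.

Lemma comp_monol i (A B C : {set T i}) : A \subset B -> Defs.comp (alg i) A C \subset Defs.comp (alg i) B C.
Proof.
move=> AB. have [ci [_ [cc _]]] := HP.1 i.
have e : forall X Y, Defs.comp (alg i) X Y = conv (alg i) (Defs.comp (alg i) (conv (alg i) Y) (conv (alg i) X)).
  by move=> X Y; rewrite cc !ci.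
rewrite (e A C) (e B C).
by apply: conv_mono; apply: comp_monor; apply: conv_mono.
Qed.

Lemma proj_mono (i j : 'I_m) (A B : {set T i}) : i != j -> A \subset B -> (P i j A) \subset (P i j B).
Proof.
move=> ij AB. have [pU _] := HP.2 i j ij.
have -> : B = A :|: B by apply/esym/setUidPr.
by rewrite pU subsetUl.
Qed.

Lemma mconvK (R : multirel T) : mconv alg (mconv alg R) = R.
Proof. apply: functional_extensionality_dep => i; exact: conv_inv. Qed.

Lemma mconv_mono (R R' : multirel T) : msub R R' -> msub (mconv alg R) (mconv alg R').
Proof. by move=> H i; apply: conv_mono. Qed.

Lemma pstep_sub R R' : pstep P R R' -> msub R' R.
Proof.
case=> i [j [_ ->]] k; case: eqP => _ //; exact: subsetIl.
Qed.

Lemma prt_sub R R' : clos_refl_trans _ (pstep P) R R' -> msub R' R.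
Proof.
elim=> [x y /pstep_sub //| x k | x y z _ H1 _ H2 k] //.
exact: subset_trans (H2 k) (H1 k).
Qed.

Definition sym (E : finType) (N : E -> E -> multirel T) :=
  forall x y, x != y -> N y x = mconv alg (N x y).

Definition nsub (E : finType) (N N' : E -> E -> multirel T) := forall a b, msub (N a b) (N' a b).

Ltac neqs := repeat match goal with H : is_true (?u != ?v) |- _ =>
  let e := fresh in let e' := fresh in
  have e : (u == v) = false := negbTE H;
  have e' : (v == u) = false := (etrans (eq_sym v u) (negbTE H));
  rewrite ?e ?e' /=; clear H end.

Lemma nupd_ok (E : finType) (N : E -> E -> multirel T) x z R :
  sym N -> x != z -> msub R (N x z) ->
  sym (nupd alg N x z R) /\ nsub (nupd alg N x z R) N.
Proof.
move=> sN xz RN; split; last first.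
move=> a b; rewrite /nupd.
  case: andP => [[/eqP -> /eqP ->] //|_].
  case: andP => [[/eqP -> /eqP ->]|_] //.
  rewrite (sN _ _ xz); exact: mconv_mono.
  move=> a b ab; rewrite /nupd.
  case: (eqVneq a x) => [?|?]; case: (eqVneq b z) => [?|?];
  case: (eqVneq a z) => [?|?]; case: (eqVneq b x) => [?|?]; subst;
  rewrite ?eqxx /=; try by move: ab; rewrite eqxx.
  all: neqs; rewrite ?mconvK ?eqxx //=; try by match goal with H : (?u == ?u) = false |- _ => rewrite eqxx in H end.
  all: try match goal with |- _ ?q ?p = _ => apply: (sN p q); apply/negbT; assumption end.
Qed.

Lemma sum_lt (I : finType) (f g : I -> nat) j : (forall k, f k <= g k) -> f j < g j ->
  \sum_k f k < \sum_k g k.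
Proof.
move=> H Hj; rewrite (bigD1 j) //= [X in _ < X](bigD1 j) //= -addSn leq_add //.
by apply: leq_sum => k _; exact: H.
Qed.

Lemma card_lt (U : finType) (A B : {set U}) : A \subset B -> A != B -> #|A| < #|B|.
Proof. by move=> AB nAB; apply: proper_card; rewrite properEneq nAB AB. Qed.

Definition mu (R : multirel T) := \sum_(i : 'I_m) #|R i|.

Lemma mu_lt (R R' : multirel T) : msub R' R -> R' <> R -> mu R' < mu R.
Proof.
move=> sub ne.
have [i Hi] : exists i, R' i != R i.
  apply: NNPP => H; apply: ne; apply: functional_extensionality_dep => i.
  by apply/eqP; apply: NNPP => H'; apply: H; exists i; apply/negP.
apply: (@sum_lt _ (fun i => #|R' i|) (fun i => #|R i|) i).
  by move=> k; apply: subset_leq_card.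
exact: card_lt.
Qed.

Lemma pclos_ex R : exists R', pclosure P R R'.
Proof.
have [n] := ubnP (mu R); elim: n R => // n IH R Hn.
case: (classic (exists i j, i != j /\ R j :&: P i j (R i) <> R j)) => [[i [j [ij ne]]]|nex]; last first.
  exists R; split; first exact: rt_refl.
  move=> i j ij; apply: NNPP => H; apply: nex; exists i, j; split => //.
set R1 := fun k => if k == j then R k :&: P i k (R i) else R k.
have st : pstep P R R1 by exists i, j.
have [R' [cl fx]] : exists R', pclosure P R1 R'.
  apply: IH; rewrite ltnS in Hn; apply: leq_trans Hn; apply: mu_lt; first exact: pstep_sub.
  move=> e; apply: ne; have := congr1 (fun f => f j) e; rewrite /R1 eqxx //.
exists R'; split => //; apply: rt_trans cl; exact: rt_step.
Qed.

Definition nmu (E : finType) (N : E -> E -> multirel T) :=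
  \sum_(p : E * E) mu (N p.1 p.2).

Lemma nmu_lt (E : finType) (N N' : E -> E -> multirel T) x z :
  nsub N' N -> N' x z <> N x z -> nmu N' < nmu N.
Proof.
move=> sub ne.
apply: (@sum_lt _ (fun p => mu (N' p.1 p.2)) (fun p => mu (N p.1 p.2)) (x, z)).
  move=> k; apply: leq_sum => i _; apply: subset_leq_card; exact: sub.
exact: mu_lt.
Qed.

Lemma nupd_xz (E : finType) (N : E -> E -> multirel T) x z R : nupd alg N x z R x z = R.
Proof. by rewrite /nupd !eqxx. Qed.

Lemma aclos_ex (E : finType) (N : E -> E -> multirel T) : sym N -> exists N', aclosure alg P N N'.
Proof.
have [n] := ubnP (nmu N); elim: n N => // n IH N Hn sN.
case: (classic (exists x z, x != z /\ ~ pfixed P (N x z))) => [[x [z [xz npf]]]|nex1].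
  have [R [clR fxR]] := pclos_ex (N x z).
  have sR := prt_sub clR.
  have [sN1 sub1] := nupd_ok sN xz sR.
  have st : nstep alg P N (nupd alg N x z R) by left; exists x, z, R.
  have [N' [cl fx]] : exists N', aclosure alg P (nupd alg N x z R) N'.
    apply: IH => //; rewrite ltnS in Hn; apply: leq_trans Hn; apply: (nmu_lt (x := x) (z := z) sub1).
    by rewrite nupd_xz => e; apply: npf; rewrite -e.
  exists N'; split => //; apply: rt_trans cl; exact: rt_step.
case: (classic (exists x y z, [/\ x != y, y != z, x != z &
     minter (N x z) (mcomp alg (N x y) (N y z)) <> N x z])) => [[x [y [z [xy yz xz ne]]]]|nex2].
  set R := minter (N x z) (mcomp alg (N x y) (N y z)).
  have sR : msub R (N x z) by move=> i; exact: subsetIl.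
  have [sN1 sub1] := nupd_ok sN xz sR.
  have st : nstep alg P N (nupd alg N x z R) by right; exists x, y, z.
  have [N' [cl fx]] : exists N', aclosure alg P (nupd alg N x z R) N'.
    apply: IH => //; rewrite ltnS in Hn; apply: leq_trans Hn; apply: (nmu_lt (x := x) (z := z) sub1).
    by rewrite nupd_xz.
  exists N'; split => //; apply: rt_trans cl; exact: rt_step.
exists N; split; first exact: rt_refl.
split.
  move=> x z xz; apply: NNPP => H; apply: nex1; exists x, z; split => //.
move=> x y z xy yz xz; apply: NNPP => H; apply: nex2; exists x, y, z; split => //.
Qed.

End Gen.

Section Main.
Variables (m : nat) (T : 'I_m -> finType) (alg : forall i, nalg (T i)).
Unset Implicit Arguments.
Variables (P P' : projs T).
Set Implicit Arguments.

Lemma minter_univ (R : multirel T) : minter R (@muniv m T) = R.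
Proof. apply: functional_extensionality_dep => i; exact: setIT. Qed.

Lemma sol_nupd (U : Type) (phi : multirel T -> U -> U -> Prop) (E : finType)
  (N : E -> E -> multirel T) (u : E -> U) x z R :
  (forall R, rel_eq (phi (mconv alg R)) (fun u v => phi R v u)) ->
  (forall a b, a != b -> phi (N a b) (u a) (u b)) -> phi R (u x) (u z) ->
  forall a b, a != b -> phi (nupd alg N x z R a b) (u a) (u b).
Proof.
move=> hc sol hR a b ab; rewrite /nupd.
case: ifP => [/andP [/eqP -> /eqP ->] //|_].
case: ifP => [/andP [/eqP -> /eqP ->]|_]; last exact: sol.
by apply/hc.
Qed.

Lemma sol_rt (U : Type) (phi : multirel T -> U -> U -> Prop) (E : finType)
  (N N' : E -> E -> multirel T) (u : E -> U) :
  seq_formalism alg P phi -> clos_refl_trans _ (nstep alg P (E:=E)) N N' ->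
  (forall a b, a != b -> phi (N a b) (u a) (u b)) ->
  (forall a b, a != b -> phi (N' a b) (u a) (u b)).
Proof.
move=> [_ [_ [hpc [hc [_ [hcomp [hint _]]]]]]].
elim=> {N N'} [N N' st| N | N1 N2 N3 _ H1 _ H2] //; last by move=> s; apply: H2; apply: H1.
move=> sol; case: st => [[x [z [R [xz [cl ->]]]]]|[x [y [z [xy yz xz ->]]]]].
  apply: sol_nupd => //; apply/(hpc _ _ cl); exact: sol.
apply: sol_nupd => //; apply/hint; split; first exact: sol.
apply: (hcomp _ _ _ (u y)); [exact: sol | exact: sol |].
have := sol _ _ xz; rewrite -{1}(minter_univ (N x z)) => /hint; by case.
Qed.

End Main.

Section Main2.
Variables (m : nat) (T : 'I_m -> finType) (alg : forall i, nalg (T i)).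
Unset Implicit Arguments.
Variables (P P' : projs T).
Set Implicit Arguments.

Lemma rt_symsub (E : finType) (N N' : E -> E -> multirel T) :
  multialgebra alg P -> clos_refl_trans _ (nstep alg P (E:=E)) N N' ->
  sym alg N -> sym alg N' /\ nsub N' N.
Proof.
move=> HP; elim=> {N N'} [N N' st| N | N1 N2 N3 _ H1 _ H2].
- move=> sN; case: st => [[x [z [R [xz [[cl _] ->]]]]]|[x [y [z [xy yz xz ->]]]]].
    by apply: (nupd_ok HP) => //; apply: prt_sub cl.
  by apply: (nupd_ok HP) => // i; apply: subsetIl.
- by move=> sN; split => // a b i.
- move=> sN; have [s2 sub2] := H1 sN; have [s3 sub3] := H2 s2; split => // a b i.
  exact: subset_trans (sub3 a b i) (sub2 a b i).
Qed.

Lemma atom1 (U : finType) (t : U) : atom [set t].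
Proof.
split; first by apply/set0Pn; exists t; rewrite in_set1.
move=> r rt; case: (classic (exists s, r s)) => [[s rs]|nr]; [right|left];
  apply: functional_extensionality => x.
  change (r x = (x \in [set t])); apply/idP/idP; first by move/(subsetP rt).
  rewrite in_set1 => /eqP ->; have := subsetP rt s rs; by rewrite in_set1 => /eqP <-.
change (r x = (x \in set0)); rewrite in_set0; apply/negP => H; apply: nr; by exists x.
Qed.

Lemma P_le_P' (i j : 'I_m) (A : {set T i}) :
  multialgebra alg P -> weakening alg P P' -> i != j -> A != set0 ->
  P i j A \subset P' i j A.
Proof.
move=> HP [HP' W] ij.
have [n] := ubnP #|A|; elim: n A => // n IH A Hn /set0Pn [t tA].
have [pU _] := HP.2 i j ij; have [pU' _] := HP'.2 i j ij.
case: (eqVneq (A :\ t) set0) => [e|ne].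
  have -> : A = [set t].
    apply/setP => s; rewrite in_set1; apply/idP/eqP => [sA|-> //].
    by apply/eqP; apply: negbNE; apply/negP => st; move/setP: e => /(_ s); rewrite !inE st sA.
  by apply: W => //; apply: atom1.
rewrite -(setD1K tA) pU pU'; apply: setUSS; first by apply: W => //; apply: atom1.
apply: IH ne; rewrite -ltnS; apply: leq_trans Hn; rewrite ltnS.
by rewrite (cardsD1 t A) tA.
Qed.

Lemma pclos_ge (Q R0 R : multirel T) :
  multialgebra alg P -> weakening alg P P' ->
  pfixed P Q -> (forall i, Q i != set0) -> msub Q R0 ->
  clos_refl_trans _ (pstep P') R0 R -> msub Q R.
Proof.
move=> HP [HP' W] fx ne sub cl; elim: cl sub => {R0 R} [R R1 st| R | R1 R2 R3 _ H1 _ H2] //.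
- move=> sub; case: st => [i [j [ij ->]]] k.
  case: eqP => [e|_]; last exact: sub.
  subst k; rewrite subsetI sub /=.
  rewrite -(fx _ _ ij); apply: subset_trans (subsetIr _ _) _.
  apply: subset_trans (P_le_P' HP (conj HP' W) ij (ne i)) _.
  exact: (@proj_mono _ _ _ P' HP' i j _ _ ij (sub i)).
- by move=> sub; apply: H2; apply: H1.
Qed.

End Main2.

Section Main3.
Variables (m : nat) (T : 'I_m -> finType) (alg : forall i, nalg (T i)).
Unset Implicit Arguments.
Variables (P P' : projs T).
Set Implicit Arguments.

Lemma nupd_ge (E : finType) (Q M : E -> E -> multirel T) x z R :
  multialgebra alg P -> sym alg Q -> nsub Q M -> x != z -> msub (Q x z) R ->
  nsub Q (nupd alg M x z R).
Proof.
move=> HP sQ sub xz sR a b; rewrite /nupd.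
case: ifP => [/andP [/eqP -> /eqP ->] //|_].
case: ifP => [/andP [/eqP -> /eqP ->]|_]; last exact: sub.
rewrite (sQ _ _ xz); move=> i; exact: (@conv_mono _ _ _ P HP i _ _ (sR i)).
Qed.

Lemma inv_rt (E : finType) (Q N M : E -> E -> multirel T) :
  multialgebra alg P -> weakening alg P P' -> sym alg Q -> nfixed alg P Q ->
  (forall a b, a != b -> forall i, Q a b i != set0) ->
  clos_refl_trans _ (nstep alg P' (E:=E)) N M -> nsub Q N -> nsub Q M.
Proof.
move=> HP W sQ fx ne; have HP' := W.1.
elim=> {N M} [N M st| N | N1 N2 N3 _ H1 _ H2] //; last by move=> s; apply: H2; apply: H1.
move=> sub; case: st => [[x [z [R [xz [[cl _] ->]]]]]|[x [y [z [xy yz xz ->]]]]].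
  apply: (nupd_ge HP) => //.
  exact: (pclos_ge HP W (fx.1 x z xz) (ne x z xz) (sub x z) cl).
apply: (nupd_ge HP) => // i.
have e := fx.2 x y z xy yz xz.
rewrite -{1}e /minter /mcomp; apply: setISS; first exact: sub.
apply: subset_trans (@comp_monol _ _ _ P HP i _ _ _ (sub x y i)) _.
exact: (@comp_monor _ _ _ P HP i _ _ _ (sub y z i)).
Qed.

End Main3.

Theorem proposition6p27 (m : nat) (T : 'I_m -> finType) (alg : forall i, nalg (T i))
  (P P' : projs T) (U : Type) (phi : multirel T -> U -> U -> Prop)
  (S : multirel T -> Prop) :
  seq_formalism alg P phi ->
  weakening alg P P' ->
  alg_tractable alg P' phi S ->
  alg_tractable alg P phi S.
Proof.
move=> F W Tr E N netN N' acl.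
have HP := F.1; have HP' := W.1.
have sN : sym alg N by move=> x y xy; exact: (netN x y xy).2.
split.
  move=> [u sol] [x [y [xy [i e]]]].
  have := sol_rt F acl.1 sol xy.
  move: F => [_ [_ [_ [_ [_ [_ [_ hb]]]]]]] /hb [B [bB [sB _]]].
  have [neB _] := bB i; have := sB i; rewrite e subset0 => /eqP Bi.
  by rewrite Bi eqxx in neB.
move=> ntriv; have [N'' acl''] := aclos_ex HP' sN.
apply/(Tr E N netN N'' acl''); move=> [x [y [xy [i e]]]].
have [sN' subN'] := rt_symsub HP acl.1 sN.
have ne : forall a b, a != b -> forall j, N' a b j != set0.
  move=> a b ab j; apply/eqP => e'; apply: (ntriv); exists a, b; split => //; by exists j.
apply: ntriv; exists x, y; split => //; exists i.
have := inv_rt HP W sN' acl.2 ne acl''.1 subN' x y i.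
by rewrite e subset0 => /eqP.
Qed.
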